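(* Let $k\in\mathbb C\setminus\mathbb Q$, let $n,m\in\mathbb Z_{>0}$, and let $p_0=n+k^{-1}m$. Two bipartitions $\alpha=(\lambda,\mu)$ and $\tilde\alpha=(\tilde\lambda,\tilde\mu)$ are $\mathcal E$-equivalent if and only if $$\alpha\setminus\pi=\tilde\alpha\setminus\pi$$ and $$\theta(\lambda\setminus\tilde\lambda)=\mu\setminus\tilde\mu,\qquad \theta(\tilde\lambda\setminus\lambda)=\tilde\mu\setminus\mu .$$
   Context: Partitions are identified with their Young diagrams, i.e. finite sets of boxes $(i,j)\in\mathbb Z_{>0}^2$ ($i$ = row, $j$ = column) closed under moving up or left. A bipartition is a pair $\alpha=(\lambda,\mu)$ of partitions; set-theoretic operations and inclusion of bipartitions are taken componentwise. The content of a box $x=(i,j)$ with parameter $a$ is $c(x,a)=(j-1)+k(i-1)+a$. For $r\ge1$ put $b_r(\alpha,k,p_0)=\sum_{x\in\lambda}c(x,0)^{r-1}+(-1)^r\sum_{y\in\mu}c(y,1+k-kp_0)^{r-1}$. Two bipartitions $\alpha,\tilde\alpha$ are called $\mathcal E$-equivalent (for the given $k,p_0$) if $b_r(\alpha,k,p_0)=b_r(\tilde\alpha,k,p_0)$ for all $r\ge1$. Let $\pi(n,m)=\{(i,j):1\le i\le n,\ 1\le j\le m\}$ be the rectangular diagram, $\pi=(\pi(n,m),\pi(n,m))$, and let $\theta:\pi(n,m)\to\pi(n,m)$ be the central symmetry $\theta(i,j)=(n-i+1,m-j+1)$. *)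

(* Defs.v *)
From HB Require Import structures.
From mathcomp Require Import all_boot all_order all_algebra.
From mathcomp Require Import finmap.
From mathcomp Require Import complex.
From mathcomp Require Import reals.
Set Implicit Arguments. Unset Strict Implicit. Unset Printing Implicit Defensive.
Import Order.TTheory GRing.Theory Num.Theory.
Local Open Scope fset_scope.
Local Open Scope ring_scope.

(* A box is (i,j) = (row, column), 1-indexed. A Young diagram is a finite set
   of boxes with positive coordinates closed under moving up or left. *)
Definition box := (nat * nat)%type.

Definition is_partition (l : {fset box}) : Prop :=
  forall x, x \in l ->
    [/\ (0 < x.1)%N, (0 < x.2)%N,
        ((1 < x.1)%N -> (x.1.-1, x.2) \in l) &
        ((1 < x.2)%N -> (x.1, x.2.-1) \in l)].

Definition is_bipartition (a : {fset box} * {fset box}) : Prop :=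
  is_partition a.1 /\ is_partition a.2.

Definition bip_diff (a b : {fset box} * {fset box}) :=
  (a.1 `\` b.1, a.2 `\` b.2).

Definition content (C : nzRingType) (k : C) (x : box) (a : C) : C :=
  (x.2.-1)%:R + k * (x.1.-1)%:R + a.

Definition b_r (C : nzRingType) (alpha : {fset box} * {fset box}) (k p0 : C)
  (r : nat) : C :=
  \sum_(x <- alpha.1) content k x 0 ^+ r.-1
  + (-1) ^+ r * \sum_(y <- alpha.2) content k y (1 + k - k * p0) ^+ r.-1.

Definition E_equiv (C : nzRingType) (k p0 : C)
  (alpha beta : {fset box} * {fset box}) : Prop :=
  forall r : nat, (0 < r)%N -> b_r alpha k p0 r = b_r beta k p0 r.

Definition rect (n m : nat) : {fset box} :=
  [fset x in [seq (i.+1, j.+1) | i <- iota 0 n, j <- iota 0 m]].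

Definition pi_bip (n m : nat) := (rect n m, rect n m).

Definition theta (n m : nat) (x : box) : box := ((n - x.1).+1, (m - x.2).+1).

Definition theta_img (n m : nat) (A : {fset box}) : {fset box} :=
  [fset theta n m x | x in A].

(* Main.v *)
Require Import Defs.
From HB Require Import structures.
From mathcomp Require Import all_boot all_order all_algebra.
From mathcomp Require Import finmap.
From mathcomp Require Import complex.
From mathcomp Require Import reals.
From mathcomp Require Import zify ring.
Import Order.TTheory GRing.Theory Num.Theory.
Local Open Scope fset_scope.
Local Open Scope ring_scope.
Lemma powsum_count (F : numFieldType) (s t : seq F) :
  (forall d, \sum_(x <- s) x ^+ d = \sum_(x <- t) x ^+ d) ->
  forall z, count (pred1 z) s = count (pred1 z) t.
Proof.
move=> H z.
set P := \prod_(y <- undup (s ++ t) | y != z) ('X - y%:P).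
have HP : \sum_(x <- s) P.[x] = \sum_(x <- t) P.[x].
  under eq_bigr do rewrite horner_coef.
  under [RHS]eq_bigr do rewrite horner_coef.
  rewrite exchange_big [RHS]exchange_big /=.
  by apply: eq_bigr => i _; rewrite -!mulr_sumr H.
have Hs u : (forall x, x \in u -> x \in undup (s++t)) ->
    \sum_(x <- u) P.[x] = (count (pred1 z) u)%:R * P.[z].
  elim: u => [|a u IH] Hu; first by rewrite big_nil mul0r.
  rewrite big_cons /= IH; last by move=> x hx; apply Hu; rewrite inE hx orbT.
  case: eqP => [->|Ha]; first by rewrite natrD mulrDl mul1r.
  rewrite add0n.
  suff -> : P.[a] = 0 by rewrite add0r.
  rewrite /P horner_prod; apply/eqP; rewrite prodf_seq_eq0; apply/hasP.
  exists a; first by apply: Hu; exact: mem_head.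
  by rewrite hornerXsubC subrr eqxx andbT; apply/eqP.
have Pz : P.[z] != 0.
  rewrite /P horner_prod prodf_seq_neq0; apply/allP => y _; apply/implyP => hy.
  by rewrite hornerXsubC subr_eq0 eq_sym.
rewrite (Hs s) ?(Hs t) in HP; last first.
- by move=> x hx; rewrite mem_undup mem_cat hx.
- by move=> x hx; rewrite mem_undup mem_cat hx orbT.
apply/eqP; rewrite -(eqr_nat F); apply/eqP; exact: (mulIf Pz).
Qed.

Lemma key (T C : eqType) (f g : T -> C) (A A' B B' : seq T) (P : pred T) (th : T -> T) :
  uniq A -> uniq A' -> uniq B -> uniq B' ->
  {in A ++ A' &, injective f} -> {in B ++ B' &, injective g} ->
  (forall x y, x \in A ++ A' -> y \in B ++ B' -> f x = g y -> P x /\ y = th x) ->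
  (forall z, count (pred1 z) (map f A ++ map g B') = count (pred1 z) (map f A' ++ map g B)) ->
  forall x, x \in A -> x \notin A' -> [/\ P x, th x \in B & th x \notin B'].
Proof.
move=> uA uA' uB uB' fi gi link H x xA xA'.
have sub1 (U V : seq T) y : y \in U -> y \in U ++ V by rewrite mem_cat => ->.
have sub2 (U V : seq T) y : y \in V -> y \in U ++ V by rewrite mem_cat orbC => ->.
have uMA : uniq (map f A) by rewrite map_inj_in_uniq //; apply: sub_in2 fi; exact: sub1.
have uMA' : uniq (map f A') by rewrite map_inj_in_uniq //; apply: sub_in2 fi; exact: sub2.
have uMB : uniq (map g B) by rewrite map_inj_in_uniq //; apply: sub_in2 gi; exact: sub1.
have uMB' : uniq (map g B') by rewrite map_inj_in_uniq //; apply: sub_in2 gi; exact: sub2.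
have := H (f x); rewrite !count_cat (count_uniq_mem _ uMA) (count_uniq_mem _ uMA')
  (count_uniq_mem _ uMB) (count_uniq_mem _ uMB') map_f //.
have -> : (f x \in map f A') = false.
  apply/negbTE/mapP => -[x' hx' e].
  move: xA'; rewrite (fi x x') ?hx' //; [exact: sub1 | exact: sub2].
case hB: (f x \in map g B); case hB': (f x \in map g B') => //= _.
case/mapP: hB => y yB e.
have [Px ey] := link x y (sub1 _ _ _ xA) (sub1 _ _ _ yB) e.
split => //; first by rewrite -ey.
apply/negP => hy; move/negbT/negP: hB'; apply; rewrite e ey; exact: map_f.
Qed.
Lemma hinj (C : numFieldType) (k : C) (hk : forall q : rat, k <> ratr q) (a b c d : int) :
  a%:~R + k * b%:~R = c%:~R + k * d%:~R -> a = c /\ b = d.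
Proof.
move=> e.
case: (b =P d) => [bd | ne].
  by split => //; move: e; rewrite bd => /addIr /intr_inj.
exfalso; apply: (hk ((c - a)%:~R / (b - d)%:~R)).
rewrite fmorph_div !rmorph_int.
have bd0 : (b - d)%:~R != 0 :> C by rewrite intr_eq0 subr_eq0; apply/eqP.
apply: (mulIf bd0); rewrite divfK // !intrB mulrBr.
transitivity ((a%:~R + k * b%:~R) - a%:~R - k * d%:~R); first ring.
by rewrite e; ring.
Qed.

Lemma in_rect n m x : (x \in rect n m) = ((0 < x.1 <= n) && (0 < x.2 <= m))%N.
Proof.
rewrite /rect inE; apply/allpairsP/idP.
  case=> -[i j] /= [hi hj ->] /=; move: hi hj; rewrite !mem_iota /=; lia.
case: x => a b /= h; exists (a.-1, b.-1); rewrite /= !mem_iota; split; try lia.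
congr pair; lia.
Qed.
Lemma split_sum (C : nzRingType) (A B : {fset box}) (F : box -> C) :
  \sum_(x <- A) F x = \sum_(x <- A `&` B) F x + \sum_(x <- A `\` B) F x.
Proof.
rewrite (big_fsetID _ (mem B)); congr (_ + _); apply: eq_fbigl => x; rewrite !inE /=; [by [] | by rewrite andbC].
Qed.

Lemma theta_inv {n m x} : x \in rect n m -> theta n m (theta n m x) = x.
Proof. rewrite in_rect /theta; case: x => a b /= h. congr pair. all: lia. Qed.

Lemma sum_theta (C : nzRingType) n m (A : {fset box}) (G : box -> C) :
  {subset A <= rect n m} ->
  \sum_(y <- theta_img n m A) G y = \sum_(x <- A) G (theta n m x).
Proof.
move=> sA; rewrite /theta_img big_imfset /=; last first.
  move=> x y hx hy e; by rewrite -(theta_inv (sA x hx)) e theta_inv // sA.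
by [].
Qed.
Theorem mainTheorem1 (R : realType) (k : R[i]) (n m : nat)
  (hk : forall q : rat, k <> ratr q) (hn : (0 < n)%N) (hm : (0 < m)%N)
  (lam mu lamt mut : {fset box})
  (ha : is_bipartition (lam, mu)) (hat : is_bipartition (lamt, mut)) :
  let p0 := n%:R + k^-1 * m%:R in
  E_equiv k p0 (lam, mu) (lamt, mut) <->
  [/\ bip_diff (lam, mu) (pi_bip n m) = bip_diff (lamt, mut) (pi_bip n m),
      theta_img n m (lam `\` lamt) = mu `\` mut &
      theta_img n m (lamt `\` lam) = mut `\` mu].
Proof.
move=> p0.
have k0 : k != 0.
  by apply/eqP => k0; apply: (hk 0); rewrite k0 rmorph0.
pose a := 1 + k - k * p0.
pose f (x : box) := content k x 0.
pose g (y : box) := - content k y a.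
pose posb (x : box) := ((0 < x.1) && (0 < x.2))%N.
have fE x : f x = ((x.2.-1)%:Z)%:~R + k * ((x.1.-1)%:Z)%:~R.
  by rewrite /f /content addr0.
have gE y : posb y -> g y = (m%:Z - y.2%:Z)%:~R + k * (n%:Z - y.1%:Z)%:~R.
  case/andP => h1 h2; rewrite /g /content /a /p0 !intrB.
  rewrite -[y.1 in RHS](prednK h1) -[y.2 in RHS](prednK h2).
  have kk : k * k^-1 = 1 by rewrite mulfV.
  rewrite mulrDr mulrA kk mul1r.
  rewrite -!pmulrn -!(addn1 (_.-1)) !natrD; ring.
have posP (A : {fset box}) : is_partition A -> forall x, x \in A -> posb x.
  by move=> hA x /hA [h1 h2 _ _]; rewrite /posb h1 h2.
have finj x y : posb x -> posb y -> f x = f y -> x = y.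
  case: x y => [x1 x2] [y1 y2]; rewrite /posb /= !fE /= => /andP[? ?] /andP[? ?].
  case/hinj => // e1 e2; congr pair; lia.
have ginj x y : posb x -> posb y -> g x = g y -> x = y.
  move=> hx hy; rewrite !gE //.
  case: x y hx hy => [x1 x2] [y1 y2].
  rewrite /posb /= => /andP[? ?] /andP[? ?].
  case/hinj => // e1 e2; congr pair; lia.
have link x y : posb x -> posb y -> f x = g y ->
    [/\ x \in rect n m, y \in rect n m, y = theta n m x & x = theta n m y].
  move=> hx hy; rewrite fE gE //; case/hinj => // e1 e2.
  move: hx hy; rewrite !in_rect /theta /posb.
  case: x e1 e2 => x1 x2; case: y => y1 y2 /= e1 e2 /andP[? ?] /andP[? ?].
  split; try (apply/andP; split; apply/andP; split); try lia; congr pair; lia.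
case: ha => /posP pl /posP pm; case: hat => /posP plt /posP pmt.
have cat_pos (A B : {fset box}) : (forall x, x \in A -> posb x) ->
    (forall x, x \in B -> posb x) -> forall x, x \in (A : seq box) ++ B -> posb x.
  by move=> hA hB x; rewrite mem_cat => /orP[/hA | /hB].
have fi (A B : {fset box}) : (forall x, x \in A -> posb x) ->
    (forall x, x \in B -> posb x) -> {in (A : seq box) ++ B &, injective f}.
  move=> hA hB x y hx hy; apply: finj; exact: (cat_pos A B).
have gi (A B : {fset box}) : (forall x, x \in A -> posb x) ->
    (forall x, x \in B -> posb x) -> {in (A : seq box) ++ B &, injective g}.
  move=> hA hB x y hx hy; apply: ginj; exact: (cat_pos A B).
split.
  move=> E.
  have Hps d : \sum_(x <- map f lam ++ map g mut) x ^+ d =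
               \sum_(x <- map f lamt ++ map g mu) x ^+ d.
    have := E d.+1 isT; rewrite /b_r /= !big_cat !big_map /=.
    have br (M : {fset box}) : (-1) ^+ d.+1 *
        \sum_(y <- M) content k y (1 + k - k * p0) ^+ d = - \sum_(y <- M) g y ^+ d.
      rewrite mulr_sumr -sumrN; apply: eq_bigr => y _.
      by rewrite /g [(- _) ^+ d]exprNn exprS mulN1r mulNr.
    rewrite !br => e; rewrite /f.
    by rewrite -(subrK (\sum_(y <- mu) g y ^+ d) (\sum_(x <- lam) content k x 0 ^+ d)) e addrAC subrK.
  have Hc := @powsum_count R[i] _ _ Hps.
  have K1 := @key _ _ f g lam lamt mu mut [pred x | x \in rect n m] (theta n m)
    (fset_uniq _) (fset_uniq _) (fset_uniq _) (fset_uniq _) (fi _ _ pl plt) (gi _ _ pm pmt)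
    (fun x y hx hy e => let: And4 h1 _ h3 _ := link x y (cat_pos _ _ pl plt _ hx) (cat_pos _ _ pm pmt _ hy) e in conj h1 h3)
    Hc.
  have K2 := @key _ _ f g lamt lam mut mu [pred x | x \in rect n m] (theta n m)
    (fset_uniq _) (fset_uniq _) (fset_uniq _) (fset_uniq _) (fi _ _ plt pl) (gi _ _ pmt pm)
    (fun x y hx hy e => let: And4 h1 _ h3 _ := link x y (cat_pos _ _ plt pl _ hx) (cat_pos _ _ pmt pm _ hy) e in conj h1 h3)
    (fun z => esym (Hc z)).
  have K3 := @key _ _ g f mu mut lam lamt [pred x | x \in rect n m] (theta n m)
    (fset_uniq _) (fset_uniq _) (fset_uniq _) (fset_uniq _) (gi _ _ pm pmt) (fi _ _ pl plt)
    (fun y x hy hx e => let: And4 _ h2 _ h4 := link x y (cat_pos _ _ pl plt _ hx) (cat_pos _ _ pm pmt _ hy) (esym e) in conj h2 h4)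
    (fun z => ltac:(have := Hc z; rewrite !count_cat => hz; by rewrite addnC [RHS]addnC hz)).
  have K4 := @key _ _ g f mut mu lamt lam [pred x | x \in rect n m] (theta n m)
    (fset_uniq _) (fset_uniq _) (fset_uniq _) (fset_uniq _) (gi _ _ pmt pm) (fi _ _ plt pl)
    (fun y x hy hx e => let: And4 _ h2 _ h4 := link x y (cat_pos _ _ plt pl _ hx) (cat_pos _ _ pmt pm _ hy) (esym e) in conj h2 h4)
    (fun z => ltac:(have := Hc z; rewrite !count_cat => hz; by rewrite addnC [RHS]addnC hz)).
  split.
  - rewrite /bip_diff /pi_bip /=; congr pair; apply/fsetP => x; rewrite !in_fsetD.
    + have [hl|hl] := boolP (x \in lam); have [ht|ht] := boolP (x \in lamt);
        rewrite ?andbT ?andbF //.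
      * by case: (K1 x hl ht) => /= ->.
      * by case: (K2 x ht hl) => /= ->.
    + have [hl|hl] := boolP (x \in mu); have [ht|ht] := boolP (x \in mut);
        rewrite ?andbT ?andbF //.
      * by case: (K3 x hl ht) => /= ->.
      * by case: (K4 x ht hl) => /= ->.
  - apply/fsetP => y; rewrite in_fsetD; apply/imfsetP/andP.
    + case=> x /= hx ->; move: hx; rewrite in_fsetD => /andP[ht hl].
      by case: (K1 x hl ht) => _ -> ->.
    + case=> hmt hmu; case: (K3 y hmu hmt) => /= hr h2 h3; exists (theta n m y).
        by rewrite /= in_fsetD h2 h3.
      by rewrite theta_inv.
  - apply/fsetP => y; rewrite in_fsetD; apply/imfsetP/andP.
    + case=> x /= hx ->; move: hx; rewrite in_fsetD => /andP[ht hl].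
      by case: (K2 x hl ht) => _ -> ->.
    + case=> hmt hmu; case: (K4 y hmu hmt) => /= hr h2 h3; exists (theta n m y).
        by rewrite /= in_fsetD h2 h3.
      by rewrite theta_inv.
case=> hbd h1 h2 r hr.
have hbd1 : lam `\` rect n m = lamt `\` rect n m by move: hbd => [].
have sub (A B : {fset box}) : A `\` rect n m = B `\` rect n m ->
    {subset A `\` B <= rect n m}.
  move=> e x; rewrite in_fsetD => /andP[hB hA]; apply/negPn/negP => hx.
  have : x \in A `\` rect n m by rewrite in_fsetD hx hA.
  by rewrite e in_fsetD (negbTE hB) andbF.
have s1 := sub _ _ hbd1.
have s2 := sub _ _ (esym hbd1).
have cth x : x \in rect n m -> content k (theta n m x) a = - content k x 0.
  move=> hx.
  have pt : posb (theta n m x) by rewrite /posb /theta.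
  have := gE _ pt; rewrite /g => /(congr1 -%R); rewrite opprK => ->.
  rewrite -[content k x 0]/(f x) fE.
  clear pt; move: hx; rewrite in_rect /theta; case: x => x1 x2 /= hx.
  have -> : (m%:Z - (m - x2).+1%:Z) = (x2.-1)%:Z by lia.
  by have -> : (n%:Z - (n - x1).+1%:Z) = (x1.-1)%:Z by lia.
case: r hr => // d _.
rewrite /b_r /= !mulr_sumr.
rewrite (split_sum _ lam lamt) (split_sum _ lamt lam) (split_sum _ mu mut) (split_sum _ mut mu).
rewrite -h1 -h2 !sum_theta // (fsetIC lamt lam) (fsetIC mut mu).
have S (A : {fset box}) : {subset A <= rect n m} ->
   \sum_(x <- A) (-1) ^+ d.+1 * content k (theta n m x) (1 + k - k * p0) ^+ d
   = - \sum_(x <- A) content k x 0 ^+ d.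
  move=> sA; rewrite -sumrN; apply: eq_big_seq => x hx.
  rewrite -/a cth ?sA // [(- _) ^+ d]exprNn exprS mulN1r mulNr; congr (- _).
  by rewrite mulrA -exprMn mulN1r opprK expr1n mul1r.
rewrite !S //; ring.
Qed.
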